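(* Let $X$ be a maximal space, $A\subseteq X$ and $x\in X$. If $x\in\overline{A}\setminus A$, then there is $B\subseteq A$ with no isolated points (in its subspace topology) such that $x\in\overline{B}$.
   Context: Spaces are countable $T_1$ topological spaces. A space is maximal if it is dense-in-itself (has no isolated points) and every strictly finer topology on it has an isolated point. *)

(* Defs.v *)
Definition is_topology {T : Type} (O : (T -> Prop) -> Prop) : Prop :=
  O (fun _ => True) /\
  O (fun _ => False) /\
  (forall U V, O U -> O V -> O (fun x => U x /\ V x)) /\
  (forall (F : (T -> Prop) -> Prop),
      (forall U, F U -> O U) -> O (fun x => exists U, F U /\ U x)).

Definition T1_top {T : Type} (O : (T -> Prop) -> Prop) : Prop :=
  forall x y : T, x <> y -> exists U, O U /\ U x /\ ~ U y.

Definition countable_type (T : Type) : Prop :=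
  exists f : T -> nat, forall x y, f x = f y -> x = y.

Definition isolated_point {T : Type} (O : (T -> Prop) -> Prop) (x : T) : Prop :=
  O (fun y => y = x).

Definition dense_in_itself {T : Type} (O : (T -> Prop) -> Prop) : Prop :=
  forall x : T, ~ isolated_point O x.

Definition strictly_finer {T : Type} (O' O : (T -> Prop) -> Prop) : Prop :=
  (forall U, O U -> O' U) /\ exists U, O' U /\ ~ O U.

Definition maximal_space {T : Type} (O : (T -> Prop) -> Prop) : Prop :=
  is_topology O /\ dense_in_itself O /\
  forall O', is_topology O' -> strictly_finer O' O -> exists x, isolated_point O' x.

Definition closure {T : Type} (O : (T -> Prop) -> Prop) (A : T -> Prop) (x : T) : Prop :=
  forall U, O U -> U x -> exists y, U y /\ A y.

Definition no_isolated_in_subspace {T : Type} (O : (T -> Prop) -> Prop) (B : T -> Prop) : Prop :=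
  forall b, B b -> forall U, O U -> U b -> exists c, B c /\ U c /\ c <> b.

(* Main.v *)
Require Import Defs.
From Stdlib Require Import Classical FunctionalExtensionality PropExtensionality.

Lemma O_ext {T} (O:(T->Prop)->Prop) (U V : T -> Prop) :
  O U -> (forall y, U y <-> V y) -> O V.
Proof.
  intros HU H. replace V with U; auto.
  apply functional_extensionality; intro y; apply propositional_extensionality; auto.
Qed.

Lemma O_inter {T} (O:(T->Prop)->Prop) (U V : T -> Prop) :
  is_topology O -> O U -> O V -> O (fun y => U y /\ V y).
Proof. intros (_&_&Hi&_); auto. Qed.

Lemma O_union2 {T} (O:(T->Prop)->Prop) (U V : T -> Prop) :
  is_topology O -> O U -> O V -> O (fun y => U y \/ V y).
Proof.
  intros (_&_&_&Hu) HU HV.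
  apply O_ext with (fun x => exists W, (W = U \/ W = V) /\ W x).
  - apply Hu; intros W [->| ->]; auto.
  - intro y; split.
    + intros [W [[->| ->] H]]; auto.
    + intros [H|H]; [exists U|exists V]; auto.
Qed.

Lemma crowded_open {T} (O:(T->Prop)->Prop) (U : T -> Prop) :
  dense_in_itself O -> is_topology O -> O U -> no_isolated_in_subspace O U.
Proof.
  intros Hd Ht HU b Ub V HV Vb. apply NNPP; intro Hn. apply (Hd b).
  unfold isolated_point. apply O_ext with (fun y => U y /\ V y).
  - apply O_inter; auto.
  - intro y; split.
    + intros [Uy Vy]. apply NNPP; intro ne. apply Hn; exists y; auto.
    + intros ->; auto.
Qed.

Lemma submax {T} (O:(T->Prop)->Prop) (D : T -> Prop) :
  T1_top O -> maximal_space O ->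
  (forall U, O U -> forall u, U u -> exists y, U y /\ D y) -> O D.
Proof.
  intros HT1 Hmax Hdense. apply NNPP; intro nD.
  destruct Hmax as (Ht & Hd & Hm).
  pose proof Ht as (Hfull & Hempty & Hint & Hun).
  set (O' := fun W : T -> Prop => exists U V, O U /\ O V /\
               forall y, W y <-> U y \/ (V y /\ D y)).
  assert (Ht' : is_topology O').
  { split; [|split; [|split]].
    - exists (fun _ => True), (fun _ => False); repeat split; auto; tauto.
    - exists (fun _ => False), (fun _ => False); repeat split; auto; tauto.
    - intros W1 W2 [U1 [V1 [HU1 [HV1 H1]]]] [U2 [V2 [HU2 [HV2 H2]]]].
      exists (fun y => U1 y /\ U2 y),
        (fun y => (U1 y /\ V2 y) \/ (V1 y /\ U2 y) \/ (V1 y /\ V2 y)).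
      split; [apply O_inter; auto|]. split.
      + apply O_union2; [auto|apply O_inter; auto|apply O_union2; auto; apply O_inter; auto].
      + intro y; rewrite H1, H2; tauto.
    - intros F HF.
      exists (fun y => exists U, (O U /\ exists W V, F W /\ O V /\
                 forall z, W z <-> U z \/ (V z /\ D z)) /\ U y).
      exists (fun y => exists V, (O V /\ exists W U, F W /\ O U /\
                 forall z, W z <-> U z \/ (V z /\ D z)) /\ V y).
      split; [apply Hun; intros U [HU _]; exact HU|].
      split; [apply Hun; intros U [HU _]; exact HU|].
      intro y; split.
      + intros [W [FW Wy]]. destruct (HF W FW) as [U [V [HU [HV HW]]]].
        apply HW in Wy. destruct Wy as [Uy | [Vy Dy]].
        * left; exists U; split; [split; [auto| exists W, V; auto] | auto].
        * right; split; [exists V; split;[split;[auto| exists W, U; auto]|auto]|auto].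
      + intros [[U [[HU [W [V [FW [HV HW]]]]] Uy]] | [[V [[HV [W [U [FW [HU HW]]]]] Vy]] Dy]];
          exists W; split; auto; apply HW; auto. }
  assert (Hfin : strictly_finer O' O).
  { split.
    - intros U HU; exists U, (fun _ => False); repeat split; auto; tauto.
    - exists D; split; [|exact nD].
      exists (fun _ => False), (fun _ => True); repeat split; auto; tauto. }
  destruct (Hm O' Ht' Hfin) as [p Hp].
  destruct Hp as [U [V [HU [HV Hpe]]]].
  assert (pp: U p \/ (V p /\ D p)) by (apply Hpe; reflexivity).
  destruct pp as [Up | [Vp Dp]].
  - apply (Hd p). apply (O_ext O U); auto. intro y; split.
    + intro Uy; apply Hpe; auto.
    + intros ->; auto.
  - destruct (classic (exists q, V q /\ q <> p)) as [[q [Vq nqp]] | Hno].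
    + destruct (HT1 q p nqp) as [W [HW [Wq nWp]]].
      destruct (Hdense (fun y => V y /\ W y) (O_inter O V W Ht HV HW) q (conj Vq Wq))
        as [r [[Vr Wr] Dr]].
      assert (r = p) by (apply Hpe; right; auto). subst r; contradiction.
    + apply (Hd p). apply (O_ext O V); auto. intro y; split.
      * intro Vy; apply NNPP; intro ne; apply Hno; eauto.
      * intros ->; auto.
Qed.

Theorem mainTheorem11 (T : Type) (O : (T -> Prop) -> Prop)
  (Hcount : countable_type T) (HT1 : T1_top O) (Hmax : maximal_space O)
  (A : T -> Prop) (x : T) :
  closure O A x -> ~ A x ->
  exists B : T -> Prop,
    (forall y, B y -> A y) /\ no_isolated_in_subspace O B /\ closure O B x.
Proof.
  intros Hcl nAx.
  pose proof Hmax as (Ht & Hd & _).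
  set (B := fun y => A y /\ exists C, (forall z, C z -> A z) /\
                     no_isolated_in_subspace O C /\ C y).
  assert (HBc : no_isolated_in_subspace O B).
  { intros b [Ab [C [CA [Cc Cb]]]] U HU Ub.
    destruct (Cc b Cb U HU Ub) as [c [Cc' [Uc ne]]].
    exists c; repeat split; auto. exists C; auto. }
  assert (HD : O (fun y => ~ A y \/ B y)).
  { apply submax; auto. intros U HU u Uu. apply NNPP; intro Hn.
    assert (HS: forall y, U y -> A y /\ ~ B y).
    { intros y Uy; split.
      - apply NNPP; intro; apply Hn; exists y; auto.
      - intro; apply Hn; exists y; auto. }
    apply (proj2 (HS u Uu)). split; [apply HS; auto|].
    exists U; repeat split; auto.
    - intros z Uz; apply HS; auto.
    - apply crowded_open; auto. }
  exists B; split; [intros y [Ay _]; auto|]. split; [auto|].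
  intros U HU Ux.
  destruct (Hcl (fun y => U y /\ (~ A y \/ B y))) as [y [[Uy [nA|By]] Ay]].
  - apply O_inter; auto.
  - split; auto.
  - contradiction.
  - exists y; auto.
Qed.
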